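(* Let $M=(Q,c_1,c_2)$ be a Minsky machine with instruction sequence $Q=(q_1,\dots,q_N)$, and let $T_{\mathrm{comp}}$ be the product transition system over variables $\{pc,x,z_1,z_2,y_1,y_2,c_1,c_2,q\}$ with $\mathit{Init}_{\mathrm{comp}} := \mathit{Init}\wedge c_1=0\wedge c_2=0\wedge q=1$ and $\mathit{TR}_{\mathrm{comp}} := q\neq N\wedge \mathit{TR}\wedge \mathit{TR}_M$, where $\mathit{Init},\mathit{TR}$ are those of $T_{\mathrm{Prog}}$ and $\mathit{TR}_M$ is the QFLIA formula over $\{c_1,c_2,q,c_1',c_2',q'\}$ encoding one step of $M$ (as a disjunction over $j\in\{1,\dots,N-1\}$ of $q=j$ conjoined with the effect of instruction $q_j$). In each step the product thus performs one step of $T_{\mathrm{Prog}}$ and one step of $M$ simultaneously, and it has no transitions once $M$ is at its halting instruction $q_N$. Let $P := (pc=\mathrm{end})\to(y_2=2y_1)$. Then $T_{\mathrm{comp}}$ has an inductive invariant that is a QFLIA formula over its variables if and only if $M$ halts (i.e., the run of $M$ from $c_1=c_2=0$ at instruction $q_1$ reaches $q_N$).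
   Context: QFLIA (quantifier-free linear integer arithmetic) formulas are built from integer-valued variables, integer constants, addition, multiplication by integer constants, the relations $=,<,\le$, and Boolean connectives, with no quantifiers; all variables range over $\mathbb{Z}$. A transition system is a tuple $T=(V,\mathit{Init},\mathit{TR})$ where $V$ is a finite set of integer variables, $\mathit{Init}$ is a QFLIA formula over $V$, and $\mathit{TR}$ is a QFLIA formula over $V\uplus V'$, where $V'=\{v' : v\in V\}$ is a primed copy of $V$. A state is an assignment $V\to\mathbb{Z}$. The initial states are those satisfying $\mathit{Init}$. A pair of states $(s,t)$ is a transition if $\mathit{TR}$ holds when unprimed variables take their values from $s$ and primed variables from $t$. Reachable states are those reachable from an initial state by finitely many transitions. A safety property is a QFLIA formula $P$ over $V$. We write $T\models P$ if every reachable state satisfies $P$. An inductive invariant for $T$ and $P$ is a formula $I$ over $V$ such that: (i) $\mathit{Init}\to I$ is valid; (ii) $I\wedge \mathit{TR}\to I'$ is valid, where $I'$ is obtained from $I$ by replacing each $v\in V$ with $v'$; and (iii) $I\to P$ is valid. A Minsky (2-counter) machine $M=(Q,c_1,c_2)$ has two counters $c_1,c_2$ ranging over $\mathbb{N}$, both initially $0$, and a finite instruction sequence $Q=(q_1,\dots,q_N)$, where $q_1$ is the first instruction and $q_N$ is the halting instruction. Each other instruction is one of: $i_k$ (increment $c_k$), $d_k$ (decrement $c_k$; if $c_k=0$ it stays $0$), or $t_k(j)$ (if $c_k=0$ go to instruction $j$). After each instruction control passes to the next instruction, except when a test $t_k(j)$ finds $c_k=0$, in which case control passes to instruction $j$.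 The transition system $T_{\mathrm{Prog}}$ has variables $pc,x,z_1,z_2,y_1,y_2$, with locations encoded as integers $\mathrm{start}=0$, $\mathrm{loop}_1=1$, $\mathrm{loop}_2=2$, $\mathrm{end}=3$. Its initial formula is $\mathit{Init} := pc=\mathrm{start}\wedge x>0\wedge z_1=x\wedge z_2=2x\wedge y_1=0\wedge y_2=0$. Its transition formula $\mathit{TR}$ is the disjunction of the following cases, where in each case every variable of $T_{\mathrm{Prog}}$ not mentioned keeps its value: (1) $pc\in\{\mathrm{start},\mathrm{loop}_1\}\wedge z_1>0\wedge pc'=\mathrm{loop}_1\wedge z_1'=z_1-1\wedge y_1'=y_1+x$; (2) $pc\in\{\mathrm{start},\mathrm{loop}_1\}\wedge z_1\le 0\wedge pc'=\mathrm{loop}_2$; (3) $pc=\mathrm{loop}_2\wedge z_2>0\wedge pc'=\mathrm{loop}_2\wedge z_2'=z_2-1\wedge y_2'=y_2+x$; (4) $pc=\mathrm{loop}_2\wedge z_2\le 0\wedge pc'=\mathrm{end}$; (5) $pc=\mathrm{end}\wedge pc'=\mathrm{end}$. This encodes the program that, on input $x>0$, adds $x$ to $y_1$ exactly $x$ times, then adds $x$ to $y_2$ exactly $2x$ times, and then stays at $\mathrm{end}$. *)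

(* Defs.v *)
From Stdlib Require Import ZArith List.
Import ListNotations.
Open Scope Z_scope.

Inductive term (X : Type) : Type :=
| TVar : X -> term X
| TConst : Z -> term X
| TAdd : term X -> term X -> term X
| TMul : Z -> term X -> term X.

Inductive formula (X : Type) : Type :=
| FTrue : formula X
| FFalse : formula X
| FEq : term X -> term X -> formula X
| FLt : term X -> term X -> formula X
| FLe : term X -> term X -> formula X
| FNot : formula X -> formula X
| FAnd : formula X -> formula X -> formula X
| FOr : formula X -> formula X -> formula X
| FImp : formula X -> formula X -> formula X.

Arguments TVar {X}. Arguments TConst {X}. Arguments TAdd {X}. Arguments TMul {X}.
Arguments FTrue {X}. Arguments FFalse {X}. Arguments FEq {X}. Arguments FLt {X}.
Arguments FLe {X}. Arguments FNot {X}. Arguments FAnd {X}. Arguments FOr {X}.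
Arguments FImp {X}.

Fixpoint teval {X} (e : X -> Z) (t : term X) : Z :=
  match t with
  | TVar x => e x
  | TConst c => c
  | TAdd a b => teval e a + teval e b
  | TMul c a => c * teval e a
  end.

Fixpoint holds {X} (e : X -> Z) (f : formula X) : Prop :=
  match f with
  | FTrue => True
  | FFalse => False
  | FEq a b => teval e a = teval e b
  | FLt a b => teval e a < teval e b
  | FLe a b => teval e a <= teval e b
  | FNot g => ~ holds e g
  | FAnd g h => holds e g /\ holds e h
  | FOr g h => holds e g \/ holds e h
  | FImp g h => holds e g -> holds e h
  end.

Fixpoint tmap {X Y} (r : X -> Y) (t : term X) : term Y :=
  match t with
  | TVar x => TVar (r x)
  | TConst c => TConst c
  | TAdd a b => TAdd (tmap r a) (tmap r b)
  | TMul c a => TMul c (tmap r a)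
  end.

Fixpoint fmap {X Y} (r : X -> Y) (f : formula X) : formula Y :=
  match f with
  | FTrue => FTrue
  | FFalse => FFalse
  | FEq a b => FEq (tmap r a) (tmap r b)
  | FLt a b => FLt (tmap r a) (tmap r b)
  | FLe a b => FLe (tmap r a) (tmap r b)
  | FNot g => FNot (fmap r g)
  | FAnd g h => FAnd (fmap r g) (fmap r h)
  | FOr g h => FOr (fmap r g) (fmap r h)
  | FImp g h => FImp (fmap r g) (fmap r h)
  end.

Definition valid {X} (f : formula X) : Prop := forall e : X -> Z, holds e f.

Definition FOrs {X} (l : list (formula X)) : formula X := fold_right FOr FFalse l.

(** * Transition systems: V is the variable type; the primed copy V' is
    represented by [inr] in [V + V] (unprimed variables are [inl]). *)
Record TS (V : Type) := mkTS { ts_init : formula V; ts_tr : formula (V + V) }.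
Arguments mkTS {V}. Arguments ts_init {V}. Arguments ts_tr {V}.

Definition prime_ {V} (I : formula V) : formula (V + V) := fmap inr I.

Definition inductive_invariant {V} (T : TS V) (P I : formula V) : Prop :=
  valid (FImp (ts_init T) I) /\
  valid (FImp (FAnd (fmap inl I) (ts_tr T)) (prime_ I)) /\
  valid (FImp I P).

Inductive counter := C1 | C2.

Inductive instr :=
| Inc : counter -> instr
| Dec : counter -> instr
| Test : counter -> nat -> instr.   (* t_k(j): if c_k = 0 go to instruction j *)

(** A machine is given by the list [prog] = (q_1, ..., q_{N-1}) of its
    non-halting instructions; N := length prog + 1 and q_N is the halting one. *)
Definition mN (prog : list instr) : nat := S (length prog).

Definition wf_machine (prog : list instr) : Prop :=
  forall k j, In (Test k j) prog -> (1 <= j <= mN prog)%nat.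

(** configurations: (current instruction index, c1, c2) *)
Definition config := (nat * nat * nat)%type.

Definition getc (k : counter) (c1 c2 : nat) : nat :=
  match k with C1 => c1 | C2 => c2 end.
Definition setc (k : counter) (v c1 c2 : nat) : nat * nat :=
  match k with C1 => (v, c2) | C2 => (c1, v) end.

Definition mstep (prog : list instr) (s t : config) : Prop :=
  let '(q, c1, c2) := s in
  (1 <= q < mN prog)%nat /\
  exists i, nth_error prog (q - 1) = Some i /\
  match i with
  | Inc k => let '(d1, d2) := setc k (S (getc k c1 c2)) c1 c2 in t = (S q, d1, d2)
  | Dec k => let '(d1, d2) := setc k (Nat.pred (getc k c1 c2)) c1 c2 in t = (S q, d1, d2)
  | Test k j => if Nat.eqb (getc k c1 c2) 0 then t = (j, c1, c2) else t = (S q, c1, c2)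
  end.

Inductive mreach (prog : list instr) : config -> Prop :=
| mreach_init : mreach prog (1%nat, 0%nat, 0%nat)
| mreach_step : forall s t, mreach prog s -> mstep prog s t -> mreach prog t.

Definition halts (prog : list instr) : Prop :=
  exists c1 c2, mreach prog (mN prog, c1, c2).

Inductive Var := pc | x | z1 | z2 | y1 | y2 | c1 | c2 | q.

Definition loc_start : Z := 0.
Definition loc_loop1 : Z := 1.
Definition loc_loop2 : Z := 2.
Definition loc_end : Z := 3.

Definition Vu (v : Var) : term (Var + Var) := TVar (inl v).
Definition Vp (v : Var) : term (Var + Var) := TVar (inr v).
Definition K {X} (c : Z) : term X := TConst c.
Definition keep (v : Var) : formula (Var + Var) := FEq (Vp v) (Vu v).
Definition keeps (l : list Var) : formula (Var + Var) := fold_right FAnd FTrue (map keep l).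
Definition FNeq {X} (a b : term X) : formula X := FNot (FEq a b).

Definition Init_prog : formula Var :=
  FAnd (FEq (TVar pc) (K loc_start))
  (FAnd (FLt (K 0) (TVar x))
  (FAnd (FEq (TVar z1) (TVar x))
  (FAnd (FEq (TVar z2) (TMul 2 (TVar x)))
  (FAnd (FEq (TVar y1) (K 0)) (FEq (TVar y2) (K 0)))))).

Definition TR_prog : formula (Var + Var) :=
  let pc_sl := FOr (FEq (Vu pc) (K loc_start)) (FEq (Vu pc) (K loc_loop1)) in
  FOrs [
    FAnd pc_sl (FAnd (FLt (K 0) (Vu z1)) (FAnd (FEq (Vp pc) (K loc_loop1))
      (FAnd (FEq (Vp z1) (TAdd (Vu z1) (K (-1))))
      (FAnd (FEq (Vp y1) (TAdd (Vu y1) (Vu x))) (keeps [x; z2; y2])))));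
    FAnd pc_sl (FAnd (FLe (Vu z1) (K 0)) (FAnd (FEq (Vp pc) (K loc_loop2))
      (keeps [x; z1; z2; y1; y2])));
    FAnd (FEq (Vu pc) (K loc_loop2)) (FAnd (FLt (K 0) (Vu z2))
      (FAnd (FEq (Vp pc) (K loc_loop2))
      (FAnd (FEq (Vp z2) (TAdd (Vu z2) (K (-1))))
      (FAnd (FEq (Vp y2) (TAdd (Vu y2) (Vu x))) (keeps [x; z1; y1])))));
    FAnd (FEq (Vu pc) (K loc_loop2)) (FAnd (FLe (Vu z2) (K 0))
      (FAnd (FEq (Vp pc) (K loc_end)) (keeps [x; z1; z2; y1; y2])));
    FAnd (FEq (Vu pc) (K loc_end)) (FAnd (FEq (Vp pc) (K loc_end))
      (keeps [x; z1; z2; y1; y2]))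
  ].

Definition cvar (k : counter) : Var := match k with C1 => c1 | C2 => c2 end.
Definition other (k : counter) : Var := match k with C1 => c2 | C2 => c1 end.

Definition effect (j : nat) (i : instr) : formula (Var + Var) :=
  let next := FEq (Vp q) (K (Z.of_nat (S j))) in
  match i with
  | Inc k => FAnd next (FAnd (FEq (Vp (cvar k)) (TAdd (Vu (cvar k)) (K 1))) (keep (other k)))
  | Dec k => FAnd next (FAnd (keep (other k))
               (FOr (FAnd (FEq (Vu (cvar k)) (K 0)) (FEq (Vp (cvar k)) (K 0)))
                    (FAnd (FLt (K 0) (Vu (cvar k)))
                          (FEq (Vp (cvar k)) (TAdd (Vu (cvar k)) (K (-1)))))))
  | Test k t => FAnd (keeps [c1; c2])
               (FOr (FAnd (FEq (Vu (cvar k)) (K 0)) (FEq (Vp q) (K (Z.of_nat t))))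
                    (FAnd (FNeq (Vu (cvar k)) (K 0)) next))
  end.

Fixpoint TR_M_from (j : nat) (l : list instr) : list (formula (Var + Var)) :=
  match l with
  | [] => []
  | i :: l' => FAnd (FEq (Vu q) (K (Z.of_nat j))) (effect j i) :: TR_M_from (S j) l'
  end.

Definition TR_M (prog : list instr) : formula (Var + Var) := FOrs (TR_M_from 1%nat prog).

Definition T_comp (prog : list instr) : TS Var :=
  mkTS (FAnd Init_prog (FAnd (FEq (TVar c1) (K 0))
          (FAnd (FEq (TVar c2) (K 0)) (FEq (TVar q) (K 1)))))
       (FAnd (FNeq (Vu q) (K (Z.of_nat (mN prog)))) (FAnd TR_prog (TR_M prog))).

Definition P_prop : formula Var :=
  FImp (FEq (TVar pc) (K loc_end)) (FEq (TVar y2) (TMul 2 (TVar y1))).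

(* Main.v *)
Require Import Defs.
From Stdlib Require Import ZArith List Lia Arith Classical.
Import ListNotations.
Open Scope Z_scope.

Lemma teval_ext {X} (e e' : X -> Z) t : (forall v, e v = e' v) -> teval e t = teval e' t.
Proof. intros H; induction t; simpl; congruence. Qed.

Lemma holds_ext {X} (e e' : X -> Z) f : (forall v, e v = e' v) -> (holds e f <-> holds e' f).
Proof. intros H; induction f; simpl; rewrite ?(teval_ext e e' _ H); tauto. Qed.

Lemma teval_tmap {X Y} (r : X -> Y) (e : Y -> Z) t : teval e (tmap r t) = teval (fun v => e (r v)) t.
Proof. induction t; simpl; congruence. Qed.

Lemma holds_fmap {X Y} (r : X -> Y) (e : Y -> Z) f : holds e (fmap r f) <-> holds (fun v => e (r v)) f.
Proof. induction f; simpl; rewrite ?teval_tmap; tauto. Qed.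

Lemma holds_FOrs {X} (e : X -> Z) l : holds e (FOrs l) <-> exists f, In f l /\ holds e f.
Proof.
  induction l as [|g l IH]; simpl.
  - split; [tauto| intros [f [[] _]]].
  - rewrite IH. split.
    + intros [H|[f [H1 H2]]]; eauto.
    + intros [f [[<-|H1] H2]]; eauto.
Qed.

Definition join (e e' : Var -> Z) : Var + Var -> Z :=
  fun s => match s with inl v => e v | inr v => e' v end.

Record PS := mkPS { ppc : Z; px : Z; pz1 : Z; pz2 : Z; py1 : Z; py2 : Z }.
Definition ps (e : Var -> Z) : PS := mkPS (e pc) (e x) (e z1) (e z2) (e y1) (e y2).
Definition pstep (s : PS) : PS :=
  let '(mkPS a b u w r t) := s in
  if orb (a =? 0) (a =? 1) then
    if 0 <? u then mkPS 1 b (u - 1) w (r + b) t else mkPS 2 b u w r t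
  else if a =? 2 then
    if 0 <? w then mkPS 2 b u (w - 1) r (t + b) else mkPS 3 b u w r t
  else s.

Ltac dest_ifs :=
  repeat match goal with
  | |- context [Z.eqb ?a ?b] => destruct (Z.eqb_spec a b)
  | |- context [Z.ltb ?a ?b] => destruct (Z.ltb_spec a b)
  end.
Ltac dest_ifs_in H :=
  repeat match type of H with
  | context [Z.eqb ?a ?b] => destruct (Z.eqb_spec a b)
  | context [Z.ltb ?a ?b] => destruct (Z.ltb_spec a b)
  end.

Lemma TRprog_sound e e' : holds (join e e') TR_prog -> 0 <= e pc <= 3 /\ ps e' = pstep (ps e).
Proof.
  unfold TR_prog, FOrs, keeps, keep, Vu, Vp, K, loc_start, loc_loop1, loc_loop2, loc_end. simpl. intros H.
  unfold ps, pstep.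
  repeat match goal with H : _ /\ _ |- _ => destruct H | H : _ \/ _ |- _ => destruct H end;
  try contradiction;
  (split; [lia|]); dest_ifs; simpl; first [exfalso; lia | f_equal; lia].
Qed.

Lemma TRprog_complete e e' : 0 <= e pc <= 3 -> ps e' = pstep (ps e) -> holds (join e e') TR_prog.
Proof.
  intros Hr H. unfold pstep, ps in H. dest_ifs_in H; simpl in H; injection H; intros;
  unfold TR_prog, FOrs, keeps, keep, Vu, Vp, K, loc_start, loc_loop1, loc_loop2, loc_end; simpl;
  try (exfalso; lia);
  first [ left; lia | right; left; lia | right; right; left; lia
        | right; right; right; left; lia | right; right; right; right; left; lia ].
Qed.

Definition enc (e : Var -> Z) (s : config) : Prop :=
  let '(q0, a, b) := s in e q = Z.of_nat q0 /\ e c1 = Z.of_nat a /\ e c2 = Z.of_nat b.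

Definition mbody (q0 a b : nat) (i : instr) (t : config) : Prop :=
  match i with
  | Inc k => let '(d1, d2) := setc k (S (getc k a b)) a b in t = (S q0, d1, d2)
  | Dec k => let '(d1, d2) := setc k (Nat.pred (getc k a b)) a b in t = (S q0, d1, d2)
  | Test k j => if Nat.eqb (getc k a b) 0 then t = (j, a, b) else t = (S q0, a, b)
  end.

Lemma mstep_unfold prog q0 a b t : mstep prog (q0,a,b) t <->
  (1 <= q0 < mN prog)%nat /\ exists i, nth_error prog (q0 - 1) = Some i /\ mbody q0 a b i t.
Proof. reflexivity. Qed.

Ltac unf := unfold effect, keeps, keep, FNeq, Vu, Vp, K, cvar, other.

Lemma effect_sound e e' j i a b : holds (join e e') (effect j i) -> e c1 = Z.of_nat a -> e c2 = Z.of_nat b ->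
  exists t, mbody j a b i t /\ enc e' t.
Proof.
  intros H Ha Hb. destruct i as [k|k|k tj]; destruct k; unf; simpl in H.
  - exists (S j, S a, b). simpl. split; [reflexivity|]. lia.
  - exists (S j, a, S b). simpl. split; [reflexivity|]. lia.
  - exists (S j, Nat.pred a, b). simpl. split; [reflexivity|]. lia.
  - exists (S j, a, Nat.pred b). simpl. split; [reflexivity|]. lia.
  - exists (if Nat.eqb a 0 then (tj, a, b) else (S j, a, b)). simpl.
    destruct (Nat.eqb_spec a 0); simpl; split; auto; lia.
  - exists (if Nat.eqb b 0 then (tj, a, b) else (S j, a, b)). simpl.
    destruct (Nat.eqb_spec b 0); simpl; split; auto; lia.
Qed.

Lemma effect_complete e e' j i a b t : mbody j a b i t -> e c1 = Z.of_nat a -> e c2 = Z.of_nat b ->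
  enc e' t -> holds (join e e') (effect j i).
Proof.
  intros H Ha Hb Ht. destruct t as [[q1 a1] b1].
  destruct i as [k|k|k tj]; destruct k; simpl in H;
  try (destruct (Nat.eqb_spec a 0)); try (destruct (Nat.eqb_spec b 0));
  injection H; intros; subst; simpl in Ht; unf; simpl; lia.
Qed.

Lemma TRMfrom_iff ee l : forall j, holds ee (FOrs (TR_M_from j l)) <->
  exists idx i, nth_error l idx = Some i /\ ee (inl q) = Z.of_nat (j + idx) /\ holds ee (effect (j + idx) i).
Proof.
  induction l as [|i l IH]; intros j; simpl.
  - split; [tauto|]. intros (idx & i & H & _). destruct idx; discriminate.
  - rewrite IH. split.
    + intros [[H1 H2]|(idx & i' & H1 & H2 & H3)].
      * exists 0%nat, i. rewrite Nat.add_0_r. auto.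
      * exists (S idx), i'. rewrite <- Nat.add_succ_comm. auto.
    + intros (idx & i' & H1 & H2 & H3). destruct idx as [|idx]; simpl in H1.
      * left. injection H1 as <-. rewrite Nat.add_0_r in *. auto.
      * right. exists idx, i'. rewrite Nat.add_succ_comm. auto.
Qed.

Lemma TRM_sound prog e e' s : holds (join e e') (TR_M prog) -> enc e s -> exists t, mstep prog s t /\ enc e' t.
Proof.
  destruct s as [[q0 a] b]. intros H (Hq & Ha & Hb). unfold TR_M in H. rewrite TRMfrom_iff in H.
  destruct H as (idx & i & Hn & Hq' & He). simpl in Hq'.
  assert (q0 = S idx) by lia. subst q0.
  destruct (effect_sound _ _ _ _ _ _ He Ha Hb) as (t & Ht1 & Ht2).
  exists t. split; auto. apply mstep_unfold. split.
  - unfold mN. assert (idx < length prog)%nat by (apply nth_error_Some; congruence). lia.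
  - exists i. simpl. rewrite Nat.sub_0_r. auto.
Qed.

Lemma TRM_complete prog e e' s t : mstep prog s t -> enc e s -> enc e' t -> holds (join e e') (TR_M prog).
Proof.
  destruct s as [[q0 a] b]. intros H Hs Ht. apply mstep_unfold in H. destruct H as (Hr & i & Hn & Hb).
  destruct Hs as (Hq & Ha & Hb'). unfold TR_M. apply TRMfrom_iff.
  exists (q0 - 1)%nat, i. replace (1 + (q0 - 1))%nat with q0 by lia. split; [auto|]. split; [simpl; lia|].
  eapply effect_complete; eauto.
Qed.

Definition mnext (prog : list instr) (s : config) : config :=
  let '(q0, a, b) := s in
  match nth_error prog (q0 - 1) with
  | Some (Inc k) => let '(d1, d2) := setc k (S (getc k a b)) a b in (S q0, d1, d2)
  | Some (Dec k) => let '(d1, d2) := setc k (Nat.pred (getc k a b)) a b in (S q0, d1, d2)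
  | Some (Test k j) => if Nat.eqb (getc k a b) 0 then (j, a, b) else (S q0, a, b)
  | None => s
  end.

Lemma mstep_next prog s t : mstep prog s t -> t = mnext prog s.
Proof.
  destruct s as [[q0 a] b]. intros H. apply mstep_unfold in H. destruct H as (_ & i & Hn & Hb).
  simpl. rewrite Hn. destruct i as [k|k|k j]; destruct k; simpl in *; auto;
  destruct Nat.eqb; auto.
Qed.

Lemma mnext_step prog q0 a b : (1 <= q0 < mN prog)%nat -> mstep prog (q0,a,b) (mnext prog (q0,a,b)).
Proof.
  intros Hr. apply mstep_unfold. split; auto. simpl.
  destruct (nth_error prog (q0 - 1)) as [i|] eqn:E.
  - exists i; split; auto. destruct i as [k|k|k j]; destruct k; simpl; auto; destruct Nat.eqb; auto.
  - apply nth_error_None in E. unfold mN in *. lia.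
Qed.

Definition mrun (prog : list instr) (k : nat) : config := Nat.iter k (mnext prog) (1%nat, 0%nat, 0%nat).

Lemma mreach_run prog s : mreach prog s -> exists k, s = mrun prog k.
Proof.
  induction 1 as [|s t H IH Hs].
  - exists 0%nat. reflexivity.
  - destruct IH as [k ->]. exists (S k). apply mstep_next in Hs. rewrite Hs. reflexivity.
Qed.

Lemma mnext_props prog q0 a b : wf_machine prog -> (1 <= q0 < mN prog)%nat ->
  let '(q1, a1, b1) := mnext prog (q0, a, b) in (1 <= q1 <= mN prog)%nat /\ (a1 <= S a)%nat /\ (b1 <= S b)%nat.
Proof.
  intros Hwf Hr. simpl.
  destruct (nth_error prog (q0 - 1)) as [i|] eqn:E.
  - destruct i as [k|k|k j]; destruct k; simpl; try lia;
    destruct Nat.eqb; try lia; pose proof (Hwf _ _ (nth_error_In _ _ E)); lia.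
  - apply nth_error_None in E. unfold mN in *. lia.
Qed.

Lemma run_ok prog : wf_machine prog -> ~ halts prog -> forall k,
  mreach prog (mrun prog k) /\ (1 <= fst (fst (mrun prog k)) < mN prog)%nat /\
  (snd (fst (mrun prog k)) <= k)%nat /\ (snd (mrun prog k) <= k)%nat.
Proof.
  intros Hwf Hnh. induction k as [|k IH].
  - simpl. split; [constructor|]. split; [|lia]. split; [lia|].
    destruct (Nat.eq_dec 1 (mN prog)) as [E|E]; [|unfold mN in *; lia].
    exfalso. apply Hnh. exists 0%nat, 0%nat. rewrite <- E. constructor.
  - change (mrun prog (S k)) with (mnext prog (mrun prog k)).
    destruct (mrun prog k) as [[q0 a] b] eqn:E. simpl in IH.
    destruct IH as (Hr & Hq & Ha & Hb).
    pose proof (mnext_step prog q0 a b Hq) as Hs.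
    pose proof (mnext_props prog q0 a b Hwf Hq) as Hp.
    destruct (mnext prog (q0, a, b)) as [[q1 a1] b1] eqn:E2. simpl.
    split; [econstructor; eauto|].
    split; [|lia]. split; [lia|].
    destruct (Nat.eq_dec q1 (mN prog)) as [E3|E3]; [|lia].
    exfalso. apply Hnh. exists a1, b1. rewrite <- E3. econstructor; eauto.
Qed.

Definition pinit (v : Z) := mkPS 0 v v (2*v) 0 0.
Definition sk (k : nat) (v : Z) := Nat.iter k pstep (pinit v).
Definition pc0 (k : nat) : Z := match k with O => 0 | S _ => 1 end.

Lemma sk_lin k v : Z.of_nat k <= v -> sk k v = mkPS (pc0 k) v (v - Z.of_nat k) (2*v) (Z.of_nat k * v) 0.
Proof.
  induction k as [|k IH]; intros Hk.
  - unfold sk, pinit; simpl. f_equal; lia.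
  - change (sk (S k) v) with (pstep (sk k v)). rewrite IH by lia.
    unfold pstep. destruct k; cbn -[Z.mul Z.of_nat Z.sub Z.add]; dest_ifs; try lia; f_equal; nia.
Qed.

Lemma sk_end k v : (1 <= k)%nat -> Z.of_nat k = v -> sk (S k) v = mkPS 2 v 0 (2*v) (v*v) 0.
Proof.
  intros Hk Hv. change (sk (S k) v) with (pstep (sk k v)). rewrite sk_lin by lia.
  destruct k as [|k]; [lia|]. unfold pstep, pc0. cbn -[Z.mul Z.of_nat Z.sub Z.add].
  destruct (Z.ltb_spec 0 (v - Z.of_nat (S k))); [lia|]. f_equal; nia.
Qed.

Definition Ginv (s : PS) (v : Z) : Prop := 0 < v /\ px s = v /\
 ((ppc s = 0 /\ pz1 s = v /\ pz2 s = 2*v /\ py1 s = 0 /\ py2 s = 0) \/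
  (ppc s = 1 /\ 0 <= pz1 s /\ py1 s = (v - pz1 s)*v /\ pz2 s = 2*v /\ py2 s = 0) \/
  (ppc s = 2 /\ 0 <= pz2 s /\ py1 s = v*v /\ py2 s = (2*v - pz2 s)*v) \/
  (ppc s = 3 /\ py1 s = v*v /\ py2 s = 2*(v*v))).

Lemma Ginv_step s v : Ginv s v -> Ginv (pstep s) v.
Proof.
  destruct s as [a b u w r t]; unfold Ginv, pstep; cbn -[Z.mul Z.of_nat Z.sub Z.add]. intros (Hv & Hb & H).
  dest_ifs; cbn -[Z.mul Z.of_nat Z.sub Z.add]; (split; [lia| split; [lia|]]);
  destruct H as [H|[H|[H|H]]]; try (exfalso; lia).
  all: first [ left; nia | right; left; nia | right; right; left; nia | right; right; right; nia ].
Qed.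

Lemma Ginv_sk k v : 0 < v -> Ginv (sk k v) v.
Proof.
  intros Hv. induction k as [|k IH].
  - unfold sk, pinit, Ginv; simpl. lia.
  - change (sk (S k) v) with (pstep (sk k v)). apply Ginv_step; auto.
Qed.

Lemma Ginv_range s v : Ginv s v -> 0 <= ppc s <= 3.
Proof. unfold Ginv; lia. Qed.

Lemma Ginv_P s v : Ginv s v -> ppc s = 3 -> py2 s = 2 * py1 s.
Proof. unfold Ginv; lia. Qed.

Lemma px_pstep s : px (pstep s) = px s.
Proof. destruct s as [a b u w r t]; unfold pstep; dest_ifs; reflexivity. Qed.

Lemma PS_eta s : s = mkPS (ppc s) (px s) (pz1 s) (pz2 s) (py1 s) (py2 s).
Proof. destruct s; reflexivity. Qed.

Lemma px_sk k v : px (sk k v) = v.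
Proof. induction k; [reflexivity|]. change (sk (S k) v) with (pstep (sk k v)). rewrite px_pstep; auto. Qed.

Definition Lin (k : nat) : formula Var :=
  FAnd (FLt (K (Z.of_nat k)) (TVar x))
  (FAnd (FEq (TVar pc) (K (pc0 k)))
  (FAnd (FEq (TVar z1) (TAdd (TVar x) (K (- Z.of_nat k))))
  (FAnd (FEq (TVar z2) (TMul 2 (TVar x)))
  (FAnd (FEq (TVar y1) (TMul (Z.of_nat k) (TVar x)))
        (FEq (TVar y2) (K 0)))))).

Definition Conc (k : nat) (v : Z) : formula Var :=
  FAnd (FEq (TVar x) (K v)) (FAnd (FEq (TVar pc) (K (ppc (sk k v)))) (FAnd (FEq (TVar z1) (K (pz1 (sk k v))))
  (FAnd (FEq (TVar z2) (K (pz2 (sk k v)))) (FAnd (FEq (TVar y1) (K (py1 (sk k v)))) (FEq (TVar y2) (K (py2 (sk k v)))))))).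

Definition Reach (k : nat) : formula Var := FOr (Lin k) (FOrs (map (Conc k) (map Z.of_nat (seq 1 k)))).

Lemma Reach_iff e k : holds e (Reach k) <-> 0 < e x /\ ps e = sk k (e x).
Proof.
  split.
  - intros [H|H].
    + unfold Lin, K in H; cbn -[Z.mul Z.of_nat Z.sub Z.add Z.opp pc0 sk] in H. split; [lia|]. rewrite sk_lin by lia. unfold ps. f_equal; nia.
    + rewrite holds_FOrs in H. destruct H as (f & Hin & Hf).
      apply in_map_iff in Hin as (v & <- & Hv). apply in_map_iff in Hv as (m & <- & Hm).
      apply in_seq in Hm. unfold Conc, K in Hf; cbn -[Z.mul Z.of_nat Z.sub Z.add Z.opp pc0 sk] in Hf.
      destruct Hf as (Hx & H1 & H2 & H3 & H4 & H5). split; [lia|].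
      rewrite Hx. rewrite (PS_eta (sk k (Z.of_nat m))). rewrite px_sk. unfold ps. rewrite Hx.
      f_equal; assumption.
  - intros [Hpos Heq]. destruct (Z_lt_le_dec (Z.of_nat k) (e x)).
    + left. rewrite sk_lin in Heq by lia. unfold ps in Heq.
      pose proof (f_equal ppc Heq) as E1; pose proof (f_equal pz1 Heq) as E2;
      pose proof (f_equal pz2 Heq) as E3; pose proof (f_equal py1 Heq) as E4;
      pose proof (f_equal py2 Heq) as E5; cbv [ppc px pz1 pz2 py1 py2] in E1, E2, E3, E4, E5.
      unfold Lin, K; cbn -[Z.mul Z.of_nat Z.sub Z.add Z.opp pc0 sk]. nia.
    + right. rewrite holds_FOrs. exists (Conc k (e x)). split.
      * apply in_map_iff; exists (e x); split; auto. apply in_map_iff.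
        exists (Z.to_nat (e x)). split; [lia| apply in_seq; lia].
      * unfold Conc, K. rewrite <- Heq. unfold ps; cbn -[Z.mul Z.of_nat Z.sub Z.add Z.opp pc0 sk]. repeat split.
Qed.

Definition is_y1 (z : Var) : bool := match z with y1 => true | _ => false end.
Definition upd1 (e : Var -> Z) (val : Z) : Var -> Z := fun z => if is_y1 z then val else e z.
Fixpoint coef (t : term Var) : Z := match t with
 | TVar z => if is_y1 z then 1 else 0 | TConst _ => 0 | TAdd a b => coef a + coef b | TMul c a => c * coef a end.
Fixpoint tb (t : term Var) : Z := match t with
 | TVar _ => 1 | TConst c => Z.abs c | TAdd a b => tb a + tb b | TMul c a => Z.abs c * tb a end.
Fixpoint fb (f : formula Var) : Z := match f with
 | FTrue | FFalse => 0
 | FEq a b | FLt a b | FLe a b => tb a + tb b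
 | FNot g => fb g
 | FAnd g h | FOr g h | FImp g h => fb g + fb h end.

Lemma teval_upd e v t : teval (upd1 e v) t = coef t * v + teval (upd1 e 0) t.
Proof.
  induction t as [z|c|a IHa b IHb|c a IHa]; cbn -[Z.mul Z.add Z.sub Z.opp Z.abs Z.of_nat].
  - unfold upd1; destruct (is_y1 z); lia.
  - lia.
  - rewrite IHa, IHb; ring.
  - rewrite IHa; ring.
Qed.

Lemma tb_nonneg t : 0 <= tb t.
Proof. induction t; cbn -[Z.mul Z.add Z.sub Z.opp Z.abs Z.of_nat]; try pose proof (Z.abs_nonneg z); nia. Qed.

Lemma fb_nonneg f : 0 <= fb f.
Proof. induction f; cbn -[Z.mul Z.add Z.sub Z.opp Z.abs Z.of_nat]; try pose proof (tb_nonneg t); try pose proof (tb_nonneg t0); lia. Qed.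

Lemma tb_bound e W t : (forall z, Z.abs (e z) <= W) -> 1 <= W -> Z.abs (teval e t) <= tb t * W.
Proof.
  intros H HW; induction t as [z|c|a IHa b IHb|c a IHa]; cbn -[Z.mul Z.add Z.sub Z.opp Z.abs Z.of_nat].
  - specialize (H z); lia.
  - pose proof (Z.abs_nonneg c); nia.
  - pose proof (Z.abs_triangle (teval e a) (teval e b)); lia.
  - rewrite Z.abs_mul. pose proof (Z.abs_nonneg c). pose proof (Z.abs_nonneg (teval e a)). nia.
Qed.

Lemma atom_aux e W v a b : (forall z, Z.abs (upd1 e 0 z) <= W) -> 1 <= W -> (tb a + tb b) * W < v ->
  coef a = coef b \/
  (coef a * v + teval (upd1 e 0) a > coef b * v + teval (upd1 e 0) b /\
   coef a * (v+1) + teval (upd1 e 0) a > coef b * (v+1) + teval (upd1 e 0) b) \/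
  (coef a * v + teval (upd1 e 0) a < coef b * v + teval (upd1 e 0) b /\
   coef a * (v+1) + teval (upd1 e 0) a < coef b * (v+1) + teval (upd1 e 0) b).
Proof.
  intros Hb HW Hv.
  pose proof (tb_bound _ _ a Hb HW). pose proof (tb_bound _ _ b Hb HW).
  pose proof (tb_nonneg a). pose proof (tb_nonneg b).
  set (ra := teval (upd1 e 0) a) in *. set (rb := teval (upd1 e 0) b) in *.
  set (ca := coef a). set (cb := coef b).
  assert (HB : Z.abs (ra - rb) < v).
  { pose proof (Z.abs_triangle ra (- rb)). rewrite Z.abs_opp in *.
    assert (tb a * W + tb b * W < v) by lia. lia. }
  assert (E1 : ca * v + ra - (cb * v + rb) = (ca - cb) * v + (ra - rb)) by ring.
  assert (E2 : ca * (v+1) + ra - (cb * (v+1) + rb) = (ca - cb) * (v+1) + (ra - rb)) by ring.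
  assert (v > 0) by lia.
  destruct (Z.lt_trichotomy (ca - cb) 0) as [HA|[HA|HA]].
  - right; right. assert ((ca - cb) * v <= - v) by nia. assert ((ca - cb) * (v+1) <= - (v+1)) by nia. lia.
  - left; lia.
  - right; left. assert ((ca - cb) * v >= v) by nia. assert ((ca - cb) * (v+1) >= (v+1)) by nia. lia.
Qed.

Ltac atom_case e W v a b Hb0 HW Hv :=
  rewrite (teval_upd e v a), (teval_upd e v b), (teval_upd e (v+1) a), (teval_upd e (v+1) b);
  destruct (atom_aux e W v a b Hb0 HW Hv) as [HA|[[H1 H2]|[H1 H2]]];
  [ rewrite HA; rewrite !Z.mul_add_distr_l; lia | lia | lia ].

Lemma stab f : forall e W v, (forall z, z <> y1 -> Z.abs (e z) <= W) -> 1 <= W -> fb f * W < v ->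
  (holds (upd1 e v) f <-> holds (upd1 e (v + 1)) f).
Proof.
  intros e W v Hb HW.
  assert (Hb0 : forall z, Z.abs (upd1 e 0 z) <= W).
  { intros z; unfold upd1; destruct z; cbn -[Z.abs]; try (apply Hb; discriminate); lia. }
  induction f as [| |a b|a b|a b|g IH|g IH h IH2|g IH h IH2|g IH h IH2]; cbn -[Z.mul Z.add Z.abs fb]; intros Hv.
  - tauto.
  - tauto.
  - atom_case e W v a b Hb0 HW Hv.
  - atom_case e W v a b Hb0 HW Hv.
  - atom_case e W v a b Hb0 HW Hv.
  - rewrite IH by (simpl in Hv; lia). tauto.
  - simpl in Hv. pose proof (fb_nonneg g); pose proof (fb_nonneg h). rewrite IH, IH2 by nia. tauto.
  - simpl in Hv. pose proof (fb_nonneg g); pose proof (fb_nonneg h). rewrite IH, IH2 by nia. tauto.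
  - simpl in Hv. pose proof (fb_nonneg g); pose proof (fb_nonneg h). rewrite IH, IH2 by nia. tauto.
Qed.

Definition Cfg (s : config) : formula Var :=
  let '(q0, a, b) := s in
  FAnd (FEq (TVar q) (K (Z.of_nat q0))) (FAnd (FEq (TVar c1) (K (Z.of_nat a))) (FEq (TVar c2) (K (Z.of_nat b)))).

Lemma Cfg_iff e s : holds e (Cfg s) <-> enc e s.
Proof. destruct s as [[q0 a] b]; unfold Cfg, K; cbn -[Z.of_nat]; tauto. Qed.

Definition Inv prog n : formula Var :=
  FOrs (map (fun k => FAnd (Cfg (mrun prog k)) (Reach k)) (seq 0 (S n))).

Lemma Inv_iff prog n e : holds e (Inv prog n) <->
  exists k, (k <= n)%nat /\ enc e (mrun prog k) /\ 0 < e x /\ ps e = sk k (e x).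
Proof.
  unfold Inv. rewrite holds_FOrs. split.
  - intros (f & Hin & Hf). apply in_map_iff in Hin as (k & <- & Hk). apply in_seq in Hk.
    destruct Hf as [H1 H2]. apply Cfg_iff in H1. apply Reach_iff in H2. exists k.
    split; [lia|]. tauto.
  - intros (k & Hk & H1 & H2). exists (FAnd (Cfg (mrun prog k)) (Reach k)). split.
    + apply in_map_iff. exists k. split; auto. apply in_seq. lia.
    + split; [apply Cfg_iff; auto | apply Reach_iff; auto].
Qed.

Lemma join_eta (ee : Var + Var -> Z) : forall v, ee v = join (fun u => ee (inl u)) (fun u => ee (inr u)) v.
Proof. intros [v|v]; reflexivity. Qed.

Lemma halts_inv prog : halts prog -> exists I, inductive_invariant (T_comp prog) P_prop I.
Proof.
  intros (a & b & Hr). apply mreach_run in Hr as [n Hn].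
  exists (Inv prog n). split; [|split].
  - intros e H. apply Inv_iff. exists 0%nat.
    unfold T_comp, ts_init, Init_prog, K, loc_start in H. cbn -[Z.mul Z.of_nat] in H.
    split; [lia|]. split; [cbn -[Z.of_nat]; lia|]. split; [lia|].
    unfold ps, sk, pinit. cbn -[Z.mul]. f_equal; lia.
  - intros ee [H1 H2]. apply (holds_fmap inl) in H1. apply Inv_iff in H1.
    set (e := fun u => ee (inl u)) in *. set (e' := fun u => ee (inr u)).
    destruct H2 as [Hneq [Hp Hm]].
    apply (holds_ext _ _ _ (join_eta ee)) in Hp. apply (holds_ext _ _ _ (join_eta ee)) in Hm.
    unfold prime_. apply (holds_fmap inr). fold e'. apply Inv_iff.
    destruct H1 as (k & Hk & Henc & Hpos & Hps).
    destruct (TRM_sound prog e e' _ Hm Henc) as (t & Hst & Hte).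
    pose proof (mstep_next _ _ _ Hst) as Ht.
    destruct (TRprog_sound e e' Hp) as [_ Hps'].
    assert (Hx : e' x = e x).
    { pose proof (f_equal px Hps') as E. rewrite px_pstep in E. exact E. }
    exists (S k). split; [|split; [|split]].
    + destruct (Nat.eq_dec k n) as [->|]; [|lia]. exfalso.
      rewrite <- Hn in Hst. apply mstep_unfold in Hst. destruct Hst as [Hr _]. lia.
    + rewrite Ht in Hte. exact Hte.
    + rewrite Hx; exact Hpos.
    + rewrite Hx, Hps', Hps. reflexivity.
  - intros e H. apply Inv_iff in H as (k & _ & _ & Hpos & Hps).
    pose proof (Ginv_sk k _ Hpos) as G. rewrite <- Hps in G.
    unfold P_prop, K, loc_end. cbn -[Z.mul]. intros Hpc.
    pose proof (Ginv_P _ _ G Hpc) as HP. exact HP.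
Qed.

Definition mk (s : PS) (cf : config) : Var -> Z := fun v => match v with
 | pc => ppc s | x => px s | z1 => pz1 s | z2 => pz2 s | y1 => py1 s | y2 => py2 s
 | c1 => Z.of_nat (snd (fst cf)) | c2 => Z.of_nat (snd cf) | q => Z.of_nat (fst (fst cf)) end.

Lemma ps_mk s cf : ps (mk s cf) = s.
Proof. destruct s; reflexivity. Qed.
Lemma enc_mk s cf : enc (mk s cf) cf.
Proof. destruct cf as [[q0 a] b]; cbn -[Z.of_nat]; auto. Qed.

Lemma inv_halts prog : wf_machine prog -> (exists I, inductive_invariant (T_comp prog) P_prop I) -> halts prog.
Proof.
  intros Hwf (I & Hinit & Hind & HP). apply NNPP; intros Hnh.
  pose proof (run_ok prog Hwf Hnh) as Hrun.
  assert (Hstep : forall s s' k, holds (mk s (mrun prog k)) I -> 0 <= ppc s <= 3 -> pstep s = s' ->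
                                 holds (mk s' (mrun prog (S k))) I).
  { intros s s' k H Hr Hs.
    set (ee := join (mk s (mrun prog k)) (mk s' (mrun prog (S k)))).
    assert (HH := Hind ee).
    change (holds ee (FAnd (fmap inl I) (ts_tr (T_comp prog))) -> holds ee (prime_ I)) in HH.
    unfold prime_ in HH. rewrite (holds_fmap inr) in HH. apply HH. split.
    - apply (holds_fmap inl). exact H.
    - destruct (Hrun k) as (_ & Hq & _ & _).
      split; [|split].
      + unfold FNeq, Vu, K. cbn -[Z.of_nat mN]. intros E. apply Nat2Z.inj in E. lia.
      + apply TRprog_complete.
        * cbn. exact Hr.
        * change (ps (mk s' (mrun prog (S k))) = pstep (ps (mk s (mrun prog k)))).
          rewrite !ps_mk. auto.
      + destruct (mrun prog k) as [[q0 a] b] eqn:E.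
        eapply TRM_complete with (s := mrun prog k) (t := mrun prog (S k)).
        * change (mrun prog (S k)) with (mnext prog (mrun prog k)). rewrite E. apply mnext_step. exact Hq.
        * rewrite E. apply enc_mk.
        * apply enc_mk. }
  set (C := fb I).
  pose proof (fb_nonneg I) as HC.
  set (Xn := Z.to_nat (3 * C + Z.of_nat (mN prog) + 4)).
  set (X := Z.of_nat Xn).
  assert (HX : X = 3 * C + Z.of_nat (mN prog) + 4) by (unfold X, Xn; lia).
  assert (Hk : forall k, holds (mk (sk k X) (mrun prog k)) I).
  { induction k as [|k IH].
    - apply Hinit. unfold T_comp, ts_init, Init_prog, K, loc_start. cbn -[Z.mul Z.of_nat]. lia.
    - apply (Hstep (sk k X)); [exact IH | apply (Ginv_range _ X); apply Ginv_sk; lia | reflexivity]. }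
  assert (H0 := Hk (S Xn)). rewrite (sk_end Xn X) in H0 by (unfold X; lia).
  remember (mrun prog (S Xn)) as cf eqn:Ecf.
  assert (Hcf : (fst (fst cf) < mN prog)%nat /\ (snd (fst cf) <= S Xn)%nat /\ (snd cf <= S Xn)%nat).
  { destruct (Hrun (S Xn)) as (_ & ? & ? & ?). rewrite Ecf. lia. }
  set (W := 2 * X + Z.of_nat (mN prog) + 1).
  assert (Hmod : holds (mk (mkPS 2 X 0 (2*X) (X*X+1) 0) cf) I).
  { set (e0 := mk (mkPS 2 X 0 (2 * X) (X * X) 0) cf).
    assert (HS := stab I e0 W (X*X)).
    assert (Hb : forall z, z <> y1 -> Z.abs (e0 z) <= W).
    { intros z Hz. destruct z; cbn -[Z.mul Z.of_nat]; unfold W; try lia; congruence. }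
    assert (HW : 1 <= W) by (unfold W; lia).
    assert (Hv : fb I * W < X * X).
    { fold C. unfold W. rewrite HX. nia. }
    specialize (HS Hb HW Hv).
    apply (holds_ext (upd1 e0 (X*X+1))).
    - intros [| | | | | | | |]; reflexivity.
    - apply HS. apply (holds_ext e0); [|exact H0].
      intros [| | | | | | | |]; reflexivity. }
  assert (Hrun2 : forall j, (j <= 2 * Xn)%nat ->
    holds (mk (mkPS 2 X 0 (2*X - Z.of_nat j) (X*X+1) (Z.of_nat j * X)) (mrun prog (S Xn + j))) I).
  { induction j as [|j IH]; intros Hj.
    - rewrite Nat.add_0_r. replace (2*X - Z.of_nat 0) with (2*X) by lia.
      replace (Z.of_nat 0 * X) with 0 by lia. rewrite <- Ecf. exact Hmod.
    - rewrite Nat.add_succ_r. apply (Hstep (mkPS 2 X 0 (2*X - Z.of_nat j) (X*X+1) (Z.of_nat j * X))).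
      + apply IH. lia.
      + cbn. lia.
      + unfold pstep. cbn -[Z.mul Z.of_nat Z.sub Z.add]. dest_ifs; try lia. f_equal; nia. }
  assert (Hfin := Hrun2 (2 * Xn)%nat (le_n _)).
  assert (Hlast := Hstep _ (mkPS 3 X 0 0 (X*X+1) (2*X*X)) _ Hfin).
  assert (HL : holds (mk (mkPS 3 X 0 0 (X * X + 1) (2 * X * X)) (mrun prog (S (S Xn + 2 * Xn)))) I).
  { apply Hlast.
    - cbn. lia.
    - unfold pstep. cbn -[Z.mul Z.of_nat Z.sub Z.add]. dest_ifs; try lia. f_equal; nia. }
  apply HP in HL. unfold P_prop, K, loc_end in HL. cbn -[Z.mul] in HL. specialize (HL eq_refl). nia.
Qed.

Theorem mainTheorem3 (prog : list instr) (Hwf : wf_machine prog) :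
  (exists I : formula Var, inductive_invariant (T_comp prog) P_prop I) <-> halts prog.
Proof.
  split.
  - apply inv_halts; auto.
  - apply halts_inv.
Qed.
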